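(* Let $X$ be a Baire space and let $Y$ be a first countable topological space such that the strong Choquet game $Ch(Y)$ is $\beta$-unfavorable. Then $X\times Y$ is a Baire space.
   Context: A topological space is a Baire space if every countable intersection of dense open subsets is dense. The strong Choquet game $Ch(Y)$: two players $\beta$ and $\alpha$ alternate, $\beta$ moving first; at round $n$, $\beta$ chooses a point $x_n$ and an open set $V_n$ with $x_n\in V_n$ (and $V_n\subseteq U_{n-1}$ for $n\ge1$), then $\alpha$ chooses an open set $U_n$ with $x_n\in U_n\subseteq V_n$. Player $\alpha$ wins the play if $\bigcap_n U_n\neq\emptyset$; otherwise $\beta$ wins. A strategy for a player is a function assigning a legal move to each finite sequence of the opponent's previous moves; it is winning if the player wins every play compatible with it. $Ch(Y)$ is $\beta$-unfavorable if $\beta$ has no winning strategy. *)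

(* Defs.v *)
From Stdlib Require Import List Arith.

Set Implicit Arguments.

Record TopSpace := {
  carrier :> Type;
  is_open : (carrier -> Prop) -> Prop;
  open_full : is_open (fun _ => True);
  open_inter : forall U V, is_open U -> is_open V -> is_open (fun x => U x /\ V x);
  open_union : forall F : (carrier -> Prop) -> Prop,
      (forall U, F U -> is_open U) -> is_open (fun x => exists U, F U /\ U x)
}.

Arguments is_open {t} _.

Definition subset {T : Type} (A B : T -> Prop) : Prop := forall x, A x -> B x.

Definition dense {X : TopSpace} (D : X -> Prop) : Prop :=
  forall U : X -> Prop, is_open U -> (exists x, U x) -> exists x, U x /\ D x.

Definition Baire (X : TopSpace) : Prop :=
  forall D : nat -> (X -> Prop),
    (forall n, is_open (D n) /\ dense (D n)) ->
    dense (fun x => forall n, D n x).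

Definition first_countable (Y : TopSpace) : Prop :=
  forall y : Y, exists B : nat -> (Y -> Prop),
    (forall n, is_open (B n) /\ B n y) /\
    (forall U, is_open U -> U y -> exists n, subset (B n) U).

Definition prod_open (X Y : TopSpace) (W : X * Y -> Prop) : Prop :=
  forall p, W p -> exists (U : X -> Prop) (V : Y -> Prop),
    is_open U /\ is_open V /\ U (fst p) /\ V (snd p) /\
    (forall a b, U a -> V b -> W (a, b)).

Lemma prod_open_full (X Y : TopSpace) : prod_open X Y (fun _ => True).
Proof.
  intros p _. exists (fun _ => True), (fun _ => True).
  repeat split; try apply open_full.
Qed.

Lemma prod_open_inter (X Y : TopSpace) (W1 W2 : X * Y -> Prop) :
  prod_open X Y W1 -> prod_open X Y W2 -> prod_open X Y (fun p => W1 p /\ W2 p).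
Proof.
  intros H1 H2 p [h1 h2].
  destruct (H1 p h1) as [U1 [V1 [oU1 [oV1 [u1 [v1 s1]]]]]].
  destruct (H2 p h2) as [U2 [V2 [oU2 [oV2 [u2 [v2 s2]]]]]].
  exists (fun x => U1 x /\ U2 x), (fun y => V1 y /\ V2 y).
  split; [apply open_inter; auto|].
  split; [apply open_inter; auto|].
  split; [split; auto|]. split; [split; auto|].
  intros a b [ha1 ha2] [hb1 hb2]; split; auto.
Qed.

Lemma prod_open_union (X Y : TopSpace) (F : (X * Y -> Prop) -> Prop) :
  (forall W, F W -> prod_open X Y W) ->
  prod_open X Y (fun p => exists W, F W /\ W p).
Proof.
  intros HF p [W [FW Wp]].
  destruct (HF W FW p Wp) as [U [V [oU [oV [u [v s]]]]]].
  exists U, V. repeat split; auto.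
  intros a b ua vb. exists W. split; auto.
Qed.

Definition prod_space (X Y : TopSpace) : TopSpace :=
  {| carrier := (carrier X * carrier Y)%type;
     is_open := prod_open X Y;
     open_full := prod_open_full X Y;
     open_inter := @prod_open_inter X Y;
     open_union := @prod_open_union X Y |}.

(** A strategy for beta maps the finite list [U_0; ...; U_{n-1}] of alpha's
    previous moves to beta's move (x_n, V_n).  Given an infinite sequence u of
    alpha moves, beta's n-th move is sigma (prefix u n). *)
Definition beta_strat (Y : TopSpace) : Type :=
  list (Y -> Prop) -> (Y * (Y -> Prop)).

Definition prefix {A : Type} (u : nat -> A) (n : nat) : list A :=
  map u (seq 0 n).

Definition alpha_legal {Y : TopSpace} (sigma : beta_strat Y)
    (u : nat -> (Y -> Prop)) (k : nat) : Prop :=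
  let m := sigma (prefix u k) in
  is_open (u k) /\ u k (fst m) /\ subset (u k) (snd m).

Definition beta_legal {Y : TopSpace} (sigma : beta_strat Y)
    (u : nat -> (Y -> Prop)) (n : nat) : Prop :=
  let m := sigma (prefix u n) in
  is_open (snd m) /\ snd m (fst m) /\
  (forall n', n = S n' -> subset (snd m) (u n')).

Definition is_beta_strategy {Y : TopSpace} (sigma : beta_strat Y) : Prop :=
  forall (u : nat -> (Y -> Prop)) (n : nat),
    (forall k, k < n -> alpha_legal sigma u k) -> beta_legal sigma u n.

Definition beta_winning {Y : TopSpace} (sigma : beta_strat Y) : Prop :=
  is_beta_strategy sigma /\
  forall u : nat -> (Y -> Prop),
    (forall k, alpha_legal sigma u k) ->
    ~ (exists y, forall n, u n y).

Definition beta_unfavorable (Y : TopSpace) : Prop :=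
  ~ exists sigma : beta_strat Y, beta_winning sigma.

(* Main.v *)
Require Import Defs.
From Stdlib Require Import List Arith Classical.
From mathcomp Require choice boolp classical_sets.
From mathcomp Require Import (canonicals) ssrnat eqtype choice seq.

Definition pk (s : list nat) : nat := choice.pickle s.
Definition upk (n : nat) : list nat :=
  match choice.unpickle n with Some s => s | None => nil end.
Lemma pkK (s : list nat) : upk (pk s) = s.
Proof. unfold upk, pk. rewrite choice.pickleK. reflexivity. Qed.

Record state (X Y : Type) := mkSt { sA : X -> Prop; sy : Y; sV : Y -> Prop }.
Arguments sA {X Y}. Arguments sy {X Y}. Arguments sV {X Y}.

Section Main.
Variables (X Y : TopSpace) (D : nat -> (X * Y -> Prop)).
Hypothesis HDo : forall n, prod_open X Y (D n).
Hypothesis HDd : forall n, @dense (prod_space X Y) (D n).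
Variables (U0 : X -> Prop) (V0 : Y -> Prop) (x0 : X) (y0 : Y).
Hypotheses (oU0 : is_open U0) (oV0 : is_open V0) (U0x0 : U0 x0) (V0y0 : V0 y0).
Hypothesis Hno : forall a b, U0 a -> V0 b -> ~ (forall n, D n (a, b)).
Variable Bf : Y -> nat -> (Y -> Prop).
Hypothesis HBf1 : forall y n, is_open (Bf y n) /\ Bf y n y.
Hypothesis HBf2 : forall y U, is_open U -> U y -> exists n, subset (Bf y n) U.
Hypothesis HX : Baire X.

Definition good (n : nat) (st : state X Y) : Prop :=
  is_open (sA st) /\ (exists a, sA st a) /\ subset (sA st) U0 /\
  is_open (sV st) /\ sV st (sy st) /\ subset (sV st) V0 /\
  (forall a b, sA st a -> sV st b -> D n (a, b)).

Lemma refine n (O : X -> Prop) (W : Y -> Prop) a b :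
  is_open O -> O a -> subset O U0 -> is_open W -> W b -> subset W V0 ->
  exists st, good n st /\ subset (sA st) O /\ subset (sV st) W.
Proof.
  intros oO Oa OU oW Wb WV.
  assert (Hb : prod_open X Y (fun p => O (fst p) /\ W (snd p))).
  { intros p [h1 h2]. exists O, W. repeat split; auto. }
  destruct (HDd n (fun p => O (fst p) /\ W (snd p)) Hb) as [[a' b'] [[Oa' Wb'] Dab]].
  { exists (a, b). simpl. auto. }
  destruct (HDo n (a', b') Dab) as [U' [V' [oU' [oV' [U'a [V'b sub]]]]]].
  exists (@mkSt X Y (fun z => U' z /\ O z) b' (fun z => V' z /\ W z)).
  unfold good; simpl. repeat split.
  - apply open_inter; auto.
  - exists a'; auto.
  - intros z [_ h]; auto.
  - apply open_inter; auto.
  - exact V'b.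
  - exact Wb'.
  - intros z [_ h]; auto.
  - intros x y [h1 _] [h2 _]; auto.
  - intros z [_ h]; auto.
  - intros z [_ h]; auto.
Qed.

Definition child n (st : state X Y) k (st' : state X Y) : Prop :=
  good (S n) st' /\ subset (sA st') (sA st) /\ subset (sV st') (Bf (sy st) k).

Definition Mfam n st k : state X Y -> Prop :=
  proj1_sig (classical_sets.ex_maximal_disjoint_subcollection sA (child n st k)).
Definition R0 : state X Y -> Prop :=
  proj1_sig (classical_sets.ex_maximal_disjoint_subcollection sA (good 0)).

Lemma Mfam_spec n st k :
  classical_sets.maximal_disjoint_subcollection sA (Mfam n st k) (child n st k).
Proof. unfold Mfam. destruct classical_sets.ex_maximal_disjoint_subcollection; auto. Qed.
Lemma R0_spec : classical_sets.maximal_disjoint_subcollection sA R0 (good 0).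
Proof. unfold R0. destruct classical_sets.ex_maximal_disjoint_subcollection; auto. Qed.

Lemma maxdense (Dd E : state X Y -> Prop) (Z : X -> Prop) :
  classical_sets.maximal_disjoint_subcollection sA E Dd -> is_open Z ->
  (forall O, is_open O -> (exists a, O a) -> subset O Z ->
     exists st, Dd st /\ (exists a, sA st a) /\ subset (sA st) O) ->
  forall O, is_open O -> (exists a, O a /\ Z a) ->
    exists a st, O a /\ E st /\ sA st a.
Proof.
  intros [h1 h2 h3] oZ Href O oO [a [Oa Za]].
  apply NNPP; intro Hn.
  destruct (Href (fun z => O z /\ Z z)) as [st' [Dst' [[a' Aa'] sub]]].
  - apply open_inter; auto.
  - exists a; auto.
  - intros z [_ h]; auto.
  - apply (h3 (fun st => E st \/ st = st')).
    + split.
      * intros t Et. left; auto.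
      * intro HC. pose proof (HC st' (or_intror eq_refl)) as Est'.
        apply Hn. exists a', st'. destruct (sub a' Aa'). auto.
    + intros t [Et | ->]; auto.
    + intros i j Ci Cj [z [zi zj]].
      destruct Ci as [Ei | ->]; destruct Cj as [Ej | ->].
      * apply h2; auto. exists z; split; auto.
      * exfalso. apply Hn. exists z, i. destruct (sub z zj); auto.
      * exfalso. apply Hn. exists z, j. destruct (sub z zi); auto.
      * reflexivity.
Qed.

Fixpoint F (s : list nat) : state X Y -> Prop :=
  match s with
  | nil => R0
  | k :: s' => fun st' => exists st, F s' st /\ Mfam (length s') st k st'
  end.

Lemma FP1 s st : F s st -> good (length s) st.
Proof.
  destruct s as [|k s]; simpl.
  - intro H. destruct R0_spec as [h1 _ _]. apply h1; auto.
  - intros [st0 [_ H]]. destruct (Mfam_spec (length s) st0 k) as [h1 _ _].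
    apply h1 in H. destruct H; auto.
Qed.

Lemma FP2 s : forall st1 st2 a, F s st1 -> F s st2 -> sA st1 a -> sA st2 a -> st1 = st2.
Proof.
  induction s as [|k s IH]; simpl.
  - intros st1 st2 a H1 H2 a1 a2. destruct R0_spec as [_ h2 _].
    apply h2; auto. exists a; split; auto.
  - intros st1 st2 a [p1 [F1 M1]] [p2 [F2 M2]] a1 a2.
    pose proof (Mfam_spec (length s) p1 k) as [h1 _ _].
    pose proof (Mfam_spec (length s) p2 k) as [h1' _ _].
    destruct (h1 _ M1) as [_ [s1 _]]. destruct (h1' _ M2) as [_ [s2 _]].
    assert (p1 = p2) by (apply (IH p1 p2 a); auto).
    subst p2. destruct (Mfam_spec (length s) p1 k) as [_ h2 _].
    apply h2; auto. exists a; split; auto.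
Qed.

Lemma FP3 s : forall O, is_open O -> (exists a, O a /\ U0 a) ->
  exists a st, O a /\ F s st /\ sA st a.
Proof.
  induction s as [|k s IH]; simpl.
  - apply (maxdense (good 0) R0 U0 R0_spec oU0).
    intros O oO [a Oa] OU. destruct (refine 0 O V0 a y0 oO Oa OU oV0 V0y0 (fun _ h => h))
      as [st [g [s1 _]]]. exists st. split; auto. split; auto.
    destruct g as [_ [ne _]]; auto.
  - intros O oO ne. destruct (IH O oO ne) as [a [st [Oa [Fst Aa]]]].
    pose proof (FP1 s st Fst) as g.
    assert (Href : forall O', is_open O' -> (exists b, O' b) -> subset O' (sA st) ->
       exists st', child (length s) st k st' /\ (exists a, sA st' a) /\ subset (sA st') O').
    { intros O' oO' [b O'b] sub.
      destruct g as [oA [_ [AU [oV [Vy [VV0 _]]]]]].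
      destruct (refine (S (length s)) O' (fun z => sV st z /\ Bf (sy st) k z) b (sy st))
        as [st' [g' [s1 s2]]]; auto.
      * intros z h. apply AU, sub, h.
      * apply open_inter; auto. apply HBf1.
      * split; auto. apply HBf1.
      * intros z [h _]; auto.
      * exists st'. split.
        -- split; auto. split.
           ++ intros z h; apply sub, s1, h.
           ++ intros z h; apply (s2 z h).
        -- split; auto. destruct g' as [_ [ne' _]]; auto. }
    destruct (maxdense (child (length s) st k) (Mfam (length s) st k) (sA st)
      (Mfam_spec _ _ _) (proj1 g) Href O oO (ex_intro _ a (conj Oa Aa)))
      as [a' [st'' [Oa' [M A']]]].
    exists a', st''. split; auto. split; auto. exists st; split; auto.
Qed.

Section Strat.
Variable x : X.
Variable sel : list nat -> state X Y.
Hypothesis Hsel : forall s, F s (sel s) /\ sA (sel s) x.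

Lemma sel_child k s : child (length s) (sel s) k (sel (k :: s)).
Proof.
  destruct (Hsel (k :: s)) as [[st [Fst M]] Ax].
  destruct (Mfam_spec (length s) st k) as [h1 _ _].
  pose proof (h1 _ M) as Hc.
  assert (st = sel s).
  { apply (FP2 s st (sel s) x); auto; try apply Hsel.
    destruct Hc as [_ [sub _]]; auto. }
  subst st. auto.
Qed.

Definition kof (y : Y) (U : Y -> Prop) : nat :=
  match boolp.pselect (exists k, subset (Bf y k) U) with
  | left e => proj1_sig (boolp.cid e)
  | right _ => 0
  end.

Lemma kof_spec y U : is_open U -> U y -> subset (Bf y (kof y U)) U.
Proof.
  intros oU Uy. unfold kof. destruct boolp.pselect as [e | n].
  - destruct (boolp.cid e); simpl; auto.
  - exfalso; apply n; apply HBf2; auto.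
Qed.

Definition code (h : list (Y -> Prop)) : list nat :=
  fold_left (fun c U => kof (sy (sel c)) U :: c) h nil.

Definition sigma : beta_strat Y := fun h => (sy (sel (code h)), sV (sel (code h))).

Lemma prefix_S {A : Type} (u : nat -> A) n : prefix u (S n) = prefix u n ++ (u n :: nil).
Proof. unfold prefix. rewrite List.seq_S, List.map_app. reflexivity. Qed.

Lemma code_S u n : code (prefix u (S n)) =
  kof (sy (sel (code (prefix u n)))) (u n) :: code (prefix u n).
Proof. rewrite prefix_S. unfold code. rewrite List.fold_left_app. reflexivity. Qed.

Lemma code_len u n : length (code (prefix u n)) = n.
Proof.
  induction n as [|n IH]; [reflexivity|]. rewrite code_S. simpl. rewrite IH. reflexivity.
Qed.

Lemma sigma_winning : beta_winning sigma.
Proof.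
  split.
  - intros u n Hl. unfold beta_legal, sigma; simpl.
    pose proof (FP1 _ _ (proj1 (Hsel (code (prefix u n))))) as g.
    destruct g as [_ [_ [_ [oV [Vy _]]]]].
    split; auto. split; auto.
    intros n' ->. rewrite code_S.
    destruct (Hl n' (Nat.lt_succ_diag_r n')) as [oU [Uy sub]].
    unfold sigma in Uy; simpl in Uy.
    pose proof (sel_child (kof (sy (sel (code (prefix u n')))) (u n')) (code (prefix u n'))) as [_ [_ s2]].
    intros z h. apply (kof_spec _ _ oU Uy), s2, h.
  - intros u Hl [y Hy].
    apply (Hno x y).
    + destruct (FP1 _ _ (proj1 (Hsel (code (prefix u 0))))) as [_ [_ [AU _]]].
      apply AU, Hsel.
    + destruct (Hl 0) as [_ [_ sub]]. unfold sigma in sub; simpl in sub.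
      destruct (FP1 _ _ (proj1 (Hsel (code (prefix u 0))))) as [_ [_ [_ [_ [_ [VV _]]]]]].
      apply VV, sub, Hy.
    + intro n. destruct (Hl n) as [_ [_ sub]]. unfold sigma in sub; simpl in sub.
      pose proof (FP1 _ _ (proj1 (Hsel (code (prefix u n))))) as g.
      rewrite code_len in g. destruct g as [_ [_ [_ [_ [_ [_ HD]]]]]].
      apply HD; [apply Hsel | apply sub, Hy].
Qed.

End Strat.

Lemma main_exists : exists sigma : beta_strat Y, beta_winning sigma.
Proof.
  set (Dn := fun n (z : X) => exists U : X -> Prop,
    ((is_open U /\ forall a, U a -> ~ U0 a) \/
     exists st, F (upk n) st /\ U = sA st) /\ U z).
  assert (HDn : forall n, is_open (Dn n) /\ dense (Dn n)).
  { intro n. split.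
    - apply open_union. intros U [[oU _] | [st [Fst ->]]]; auto.
      apply (FP1 _ _ Fst).
    - intros O oO [z Oz]. destruct (classic (exists a, O a /\ U0 a)) as [Hc | Hc].
      + destruct (FP3 (upk n) O oO Hc) as [a [st [Oa [Fst Aa]]]].
        exists a. split; auto. exists (sA st). split; auto. right. eauto.
      + exists z. split; auto. exists O. split; auto. left. split; auto.
        intros a Oa Ua. apply Hc; eauto. }
  destruct (HX Dn HDn U0 oU0 (ex_intro _ x0 U0x0)) as [x [Ux Hx]].
  assert (Hs : forall s, exists st, F s st /\ sA st x).
  { intro s. destruct (Hx (pk s)) as [U [[[_ dis] | [st [Fst ->]]] Uz]].
    - exfalso. apply (dis x); auto.
    - rewrite pkK in Fst. eauto. }
  set (sel := fun s => proj1_sig (boolp.cid (Hs s))).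
  exists (sigma sel). apply sigma_winning with (x := x).
  intro s. unfold sel. destruct boolp.cid; simpl; auto.
Qed.

End Main.

Theorem theorem1p1 (X Y : TopSpace) :
  Baire X -> first_countable Y -> beta_unfavorable Y -> Baire (prod_space X Y).
Proof.
  intros HX Hfc Hunf D HD W oW [p Wp].
  destruct (oW p Wp) as [U0 [V0 [oU0 [oV0 [U0p [V0p sub]]]]]].
  destruct (classic (exists a b, U0 a /\ V0 b /\ forall n, D n (a, b))) as [Hc | Hc].
  - destruct Hc as [a [b [Ua [Vb HDab]]]]. exists (a, b). split; auto.
  - exfalso. apply Hunf.
    set (Bf := fun y => proj1_sig (boolp.cid (Hfc y))).
    apply (main_exists X Y D (fun n => proj1 (HD n)) (fun n => proj2 (HD n))
             U0 V0 (fst p) (snd p) oU0 oV0 U0p V0p (fun a b Ua Vb Hall => Hc (ex_intro _ a (ex_intro _ b (conj Ua (conj Vb Hall))))) Bf).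
    + intros y n. unfold Bf. destruct boolp.cid as [B [h1 h2]]; simpl. apply h1.
    + intros y U oU Uy. unfold Bf. destruct boolp.cid as [B [h1 h2]]; simpl. apply h2; auto.
    + exact HX.
Qed.
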